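(* For every $\alpha>0$ there exist constants $K,\kappa>0$, depending only on $\alpha$, such that the following holds. For all $0<\beta\le1$, all $N,m\ge1$, and all strictly increasing $m$-tuples $p=(p_1<\dots<p_m)$ and $q=(q_1<\dots<q_m)$ of integers in $[1,N]$ with $|p-q|_1\ge\alpha N$, $$Z_\beta(p,q)\le(K/\beta)^{2m}e^{-\kappa\beta N}.$$
   Context: Here $|p-q|_1=\sum_a|p_a-q_a|$ and $$Z_\beta(p,q)=\sum_{\sigma\in S_m}e^{-\beta E_\sigma(p,q)},\qquad E_\sigma(p,q)=\sum_{a=1}^m|p_a-q_{\sigma(a)}|,$$ where $S_m$ is the symmetric group on $m$ elements. *)

(* Defs.v *)
From mathcomp Require Import all_boot all_fingroup.
From Stdlib Require Import Reals.

Set Implicit Arguments.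
Unset Strict Implicit.
Unset Printing Implicit Defensive.

(* A configuration: an m-tuple of integers, indexed by 'I_m (0-based). *)

Definition incr_in (N m : nat) (p : 'I_m -> nat) : Prop :=
  (forall i j : 'I_m, (i < j)%N -> (p i < p j)%N) /\
  (forall i : 'I_m, (1 <= p i)%N /\ (p i <= N)%N).

Definition l1dist (m : nat) (p q : 'I_m -> nat) : R :=
  \big[Rplus/0%R]_(a : 'I_m) Rabs (INR (p a) - INR (q a)).

Definition energy (m : nat) (s : 'S_m) (p q : 'I_m -> nat) : R :=
  \big[Rplus/0%R]_(a : 'I_m) Rabs (INR (p a) - INR (q (s a))).

Definition Zbeta (beta : R) (m : nat) (p q : 'I_m -> nat) : R :=
  \big[Rplus/0%R]_(s : 'S_m) exp (- (beta * energy s p q)).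

(* Main.v *)
From HB Require Import structures.
Require Import Defs.
From mathcomp Require Import all_boot all_fingroup.
From Stdlib Require Import Reals Lra.
Set Implicit Arguments. Unset Strict Implicit.
Lemma RplusA : associative Rplus. Proof. by move=> x y z; rewrite Rplus_assoc. Qed.
Lemma RmultA : associative Rmult. Proof. by move=> x y z; rewrite Rmult_assoc. Qed.
HB.instance Definition _ := Monoid.isComLaw.Build R 0%R Rplus RplusA Rplus_comm Rplus_0_l.
HB.instance Definition _ := Monoid.isComLaw.Build R 1%R Rmult RmultA Rmult_comm Rmult_1_l.
HB.instance Definition _ := Monoid.isMulLaw.Build R 0%R Rmult Rmult_0_l Rmult_0_r.
HB.instance Definition _ := Monoid.isAddLaw.Build R Rmult Rplus Rmult_plus_distr_r Rmult_plus_distr_l.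

Lemma sum_le (I : Type) (r : seq I) (P : pred I) (F G : I -> R) :
  (forall i, P i -> (F i <= G i)%R) ->
  (\big[Rplus/0%R]_(i <- r | P i) F i <= \big[Rplus/0%R]_(i <- r | P i) G i)%R.
Proof. move=> h; apply: (big_ind2 Rle) => //; [exact: Rle_refl| move=> *; exact: Rplus_le_compat]. Qed.

Lemma sum_ge0 (I : Type) (r : seq I) (P : pred I) (F : I -> R) :
  (forall i, P i -> (0 <= F i)%R) -> (0 <= \big[Rplus/0%R]_(i <- r | P i) F i)%R.
Proof. move=> h; apply: (big_ind (Rle 0)) => //; [exact: Rle_refl| move=> *; exact: Rplus_le_le_0_compat]. Qed.

Lemma sum_sub (I : finType) (A : pred I) (F : I -> R) :
  (forall i, (0 <= F i)%R) -> (\big[Rplus/0%R]_(i in A) F i <= \big[Rplus/0%R]_i F i)%R.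
Proof.
move=> h; rewrite big_mkcond /=; apply: sum_le => i _; case: (i \in A); [exact: Rle_refl| exact: h].
Qed.

Lemma prod_le (I : Type) (r : seq I) (P : pred I) (F G : I -> R) :
  (forall i, P i -> (0 <= F i <= G i)%R) ->
  (0 <= \big[Rmult/1%R]_(i <- r | P i) F i <= \big[Rmult/1%R]_(i <- r | P i) G i)%R.
Proof.
move=> h; apply: (big_ind2 (fun x y => 0 <= x <= y)%R) => //; first lra.
move=> x1 x2 y1 y2 [h1 h2] [h3 h4]; split; first exact: Rmult_le_pos.
by apply: Rmult_le_compat.
Qed.

Lemma exp_sum (I : Type) (r : seq I) (P : pred I) (F : I -> R) :
  exp (\big[Rplus/0%R]_(i <- r | P i) F i) = \big[Rmult/1%R]_(i <- r | P i) exp (F i).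
Proof. exact: (big_morph exp exp_plus exp_0). Qed.

Lemma scale_sum (t : R) (I : Type) (r : seq I) (P : pred I) (F : I -> R) :
  (- (t * \big[Rplus/0%R]_(i <- r | P i) F i) = \big[Rplus/0%R]_(i <- r | P i) (- (t * F i)))%R.
Proof.
apply: (big_morph (fun x => - (t * x))%R) => [x y|]; ring.
Qed.

Lemma prod_const (m : nat) (c : R) : \big[Rmult/1%R]_(i < m) c = (c ^ m)%R.
Proof. elim: m => [|m IH]; first by rewrite big_ord0. by rewrite big_ord_recr IH /= Rmult_comm. Qed.

Local Open Scope R_scope.

Section Geo.
Variable t : R.
Hypothesis ht : 0 < t.
Definition T (n : nat) := \big[Rplus/0]_(k < n) exp (- (t * INR k)).
Definition S (n x : nat) := \big[Rplus/0]_(j < n) exp (- (t * Rabs (INR x - INR j))).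

Lemma T_eq n : (1 - exp (- t)) * T n = 1 - exp (- (t * INR n)).
Proof.
elim: n => [|n IH]; first by rewrite /T big_ord0 /= Rmult_0_r Rmult_0_r Ropp_0 exp_0; ring.
rewrite /T big_ord_recr -/(T n) Rmult_plus_distr_l IH S_INR.
have -> : - (t * (INR n + 1)) = - (t * INR n) + - t by ring.
rewrite exp_plus; change (INR (nat_of_ord (@ord_max n))) with (INR n); ring.
Qed.

Lemma r_lt1 : exp (- t) < 1.
Proof. rewrite -exp_0; apply: exp_increasing; lra. Qed.

Lemma T_le n : T n <= / (1 - exp (- t)).
Proof.
have h := r_lt1.
have hp : 0 < 1 - exp (- t) by lra.
have e : T n = (1 - exp (- (t * INR n))) / (1 - exp (- t)).
  rewrite -T_eq; field; lra.
rewrite e /Rdiv; rewrite -{2}(Rmult_1_l (/ _)).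
apply: Rmult_le_compat_r; first by left; apply: Rinv_0_lt_compat.
have := exp_pos (- (t * INR n)); lra.
Qed.

Lemma T_ge0 n : 0 <= T n.
Proof. apply: sum_ge0 => i _; left; exact: exp_pos. Qed.

Lemma S_le x : forall n, S n x <= T x.+1 + T n.
Proof.
elim: x => [|x IH] n.
  have -> : S n 0 = T n.
    apply: eq_bigr => j _; congr (exp (- (t * _))).
    rewrite /= Rminus_0_l Rabs_Ropp Rabs_pos_eq //; exact: pos_INR.
  have := T_ge0 1; lra.
case: n => [|n].
  rewrite /S big_ord0; have := T_ge0 x.+2; have := T_ge0 0; lra.
rewrite /S big_ord_recl -/(S n x).
have -> : \big[Rplus/0]_(i < n) exp (- (t * Rabs (INR x.+1 - INR (lift ord0 i)))) = S n x.
  apply: eq_bigr => j _; change (INR (lift ord0 j)) with (INR j.+1); rewrite !S_INR.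
  by have -> : INR x + 1 - (INR j + 1) = INR x - INR j by ring.
change (INR (nat_of_ord (@ord0 n))) with 0; rewrite Rminus_0_r Rabs_pos_eq; last exact: pos_INR.
have e1 : T x.+2 = T x.+1 + exp (- (t * INR x.+1)) by rewrite /T big_ord_recr.
have e2 : T n.+1 = T n + exp (- (t * INR n)) by rewrite /T big_ord_recr.
have := IH n; have := exp_pos (- (t * INR n)); lra.
Qed.

Lemma S_le2 x n : S n x <= 2 * (1 + t) / t.
Proof.
have h1 := S_le x n. have h2 := T_le x.+1. have h3 := T_le n.
have hr : exp (- t) <= / (1 + t).
  rewrite exp_Ropp; apply: Rinv_le_contravar; first lra.
  left; apply: exp_ineq1; lra.
have hp : 0 < 1 - exp (- t) by have := r_lt1; lra.
have : / (1 - exp (- t)) <= (1 + t) / t.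
  have e : 1 - / (1 + t) = t / (1 + t) by field; lra.
  have h4 : t / (1 + t) <= 1 - exp (- t) by lra.
  have -> : (1 + t) / t = / (t / (1 + t)) by field; lra.
  apply: Rinv_le_contravar => //; apply: Rdiv_lt_0_compat; lra.
have -> : 2 * (1 + t) / t = (1 + t) / t + (1 + t) / t by field; lra.
lra.
Qed.
End Geo.
Lemma two_by_two (x x' y y' : R) : (x <= x')%R -> (y <= y')%R ->
  (Rabs (x - y) + Rabs (x' - y') <= Rabs (x - y') + Rabs (x' - y))%R.
Proof. move=> h1 h2; unfold Rabs; repeat destruct Rcase_abs; lra. Qed.

Section Rearr.
Variables (m : nat) (p q : 'I_m -> nat).
Hypothesis hp : forall i j : 'I_m, (i < j)%nat -> (p i < p j)%nat.
Hypothesis hq : forall i j : 'I_m, (i < j)%nat -> (q i < q j)%nat.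

Let f (x y : 'I_m) := Rabs (INR (p x) - INR (q y)).

Lemma energy_fixed (s : 'S_m) : (forall x, s x = x) -> energy s p q = l1dist p q.
Proof. by move=> h; apply: eq_bigr => a _; rewrite h. Qed.

Lemma step (s : 'S_m) (a : 'I_m) : s a != a -> (forall c, s c != c -> (a <= c)%nat) ->
  let s' := (tperm a ((s^-1)%g a) * s)%g in
  (energy s' p q <= energy s p q)%R /\
  (#|[pred x | s' x != x]| < #|[pred x | s x != x]|)%nat.
Proof.
move=> hsa hmin s'.
set b := (s^-1)%g a.
have sb : s b = a by rewrite /b permKV.
have ba : b != a by apply/eqP => e; move: hsa; rewrite -e sb e eqxx.
have s'a : s' a = a by rewrite permM tpermL.
have s'b : s' b = s a by rewrite permM tpermR.
have s'x : forall x, x != a -> x != b -> s' x = s x.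
  by move=> x h1 h2; rewrite permM tpermD // eq_sym.
split.
- have E1 : forall g : 'I_m -> R, \big[Rplus/0%R]_x g x =
     (g a + (g b + \big[Rplus/0%R]_(x | (x != a) && (x != b)) g x))%R.
    move=> g; rewrite (bigD1 a) //=; congr (_ + _)%R.
    rewrite (bigD1 b) //=.
  rewrite /energy E1 [X in (_ <= X)%R]E1.
  rewrite s'a s'b sb.
  rewrite (eq_bigr (fun x => Rabs (INR (p x) - INR (q (s x))))); last first.
    by move=> x /andP [h1 h2]; rewrite s'x.
  set rest := \big[Rplus/0%R]_(i | _) _.
  have hab : (a < b)%nat.
    rewrite ltn_neqAle eq_sym ba /=; apply: hmin; by rewrite sb eq_sym.
  have hasa : (a < s a)%nat.
    rewrite ltn_neqAle eq_sym hsa /=; apply: hmin.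
    by apply/eqP => /perm_inj e; move: hsa; rewrite e eqxx.
  have h1 := hp hab. have h2 := hq hasa.
  have := @two_by_two (INR (p a)) (INR (p b)) (INR (q a)) (INR (q (s a)))
     (le_INR _ _ (leP (ltnW h1))) (le_INR _ _ (leP (ltnW h2))).
  lra.
- apply: proper_card; apply/properP; split.
  + apply/subsetP => x; rewrite !inE.
    case: (eqVneq x a) => [->|xa]; first by rewrite s'a eqxx.
    case: (eqVneq x b) => [->|xb]; first by move=> _; rewrite sb eq_sym.
    by rewrite s'x.
  + by exists a; rewrite !inE ?s'a ?eqxx.
Qed.

Lemma rearr (s : 'S_m) : (l1dist p q <= energy s p q)%R.
Proof.
suff: forall n (s : 'S_m), (#|[pred x | s x != x]| <= n)%nat -> (l1dist p q <= energy s p q)%R.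
  by move/(_ _ s (leqnn _)).
elim=> [|n IH] {}s hc; case: (pickP [pred x | s x != x]) => [a0 ha0|hnone].
- move: hc; rewrite leqn0 => /eqP/card0_eq/(_ a0). rewrite !inE /=. by move=> H; move: ha0; rewrite /= H.
- rewrite energy_fixed; [exact: Rle_refl|] => x; by move/negbT: (hnone x); rewrite negbK => /eqP.
- case: (arg_minnP (fun x : 'I_m => nat_of_ord x) ha0) => a ha hmin.
  have [h1 h2] := @step s a ha hmin.
  apply: Rle_trans h1; apply: IH.
  by rewrite -ltnS; apply: leq_trans h2 hc.
- rewrite energy_fixed; [exact: Rle_refl|] => x; by move/negbT: (hnone x); rewrite negbK => /eqP.
Qed.
End Rearr.

Lemma exp_le x y : x <= y -> exp x <= exp y.
Proof. case=> h; [left; exact: exp_increasing | rewrite h; exact: Rle_refl]. Qed.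

Lemma perm_bound m (w : 'I_m -> 'I_m -> R) : (forall a b, 0 <= w a b) ->
  \big[Rplus/0]_(s : 'S_m) \big[Rmult/1]_a w a (s a) <=
  \big[Rmult/1]_a \big[Rplus/0]_b w a b.
Proof.
move=> hw; rewrite bigA_distr_bigA.
set G := fun f : {ffun 'I_m -> 'I_m} => \big[Rmult/1]_a w a (f a).
have -> : \big[Rplus/0]_(s : 'S_m) \big[Rmult/1]_a w a (s a) = \big[Rplus/0]_(s : 'S_m) G (pval s).
  apply: eq_bigr => s _; apply: eq_bigr => a _; by rewrite pvalE.
have E : \big[Rplus/0]_(j in (@pval (ordinal m)) @: [set: 'S_m]) G j = \big[Rplus/0]_(s : 'S_m) G (pval s).
  rewrite big_imset /=; first by apply: eq_bigl => s; rewrite inE.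
  by move=> x y _ _; apply: val_inj.
rewrite -E; apply: sum_sub => f; apply: (big_ind (Rle 0)) => //; [lra| move=> *; exact: Rmult_le_pos].
Qed.

Lemma row_bound (N m : nat) (q : 'I_m -> nat) (t : R) (x : nat) : 0 < t ->
  (forall i j : 'I_m, (i < j)%nat -> (q i < q j)%nat) -> (forall i, (q i <= N)%nat) ->
  \big[Rplus/0]_(b : 'I_m) exp (- (t * Rabs (INR x - INR (q b)))) <= 2 * (1 + t) / t.
Proof.
move=> ht hq hN.
set h := fun b : 'I_m => (inord (q b) : 'I_N.+1).
have hv : forall b, nat_of_ord (h b) = q b by move=> b; rewrite /h inordK // ltnS.
have hinj : injective h.
  move=> i j e; have e' : q i = q j by rewrite -!hv e.
  apply/eqP; rewrite -val_eqE /=; case: (ltngtP i j) => // hij.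
  - by move: (hq _ _ hij); rewrite e' ltnn.
  - by move: (hq _ _ hij); rewrite e' ltnn.
set F := fun j : 'I_N.+1 => exp (- (t * Rabs (INR x - INR j))).
have -> : \big[Rplus/0]_(b : 'I_m) exp (- (t * Rabs (INR x - INR (q b)))) =
          \big[Rplus/0]_(j in h @: [set: 'I_m]) F j.
  rewrite big_imset /=; last by move=> i j _ _; apply: hinj.
  apply: eq_big => [b|b _]; first by rewrite inE.
  by rewrite /F hv.
apply: Rle_trans (S_le2 ht x N.+1).
apply: sum_sub => j; left; exact: exp_pos.
Qed.

Local Close Scope R_scope.
Delimit Scope nat_scope with N.

Theorem mainTheorem12 :
  forall alpha : R, (0 < alpha)%R ->
  exists K kappa : R, (0 < K)%R /\ (0 < kappa)%R /\
  forall beta : R, (0 < beta)%R -> (beta <= 1)%R ->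
  forall (N m : nat), (1 <= N)%N -> (1 <= m)%N ->
  forall p q : 'I_m -> nat,
    incr_in N p -> incr_in N q ->
    (alpha * INR N <= l1dist p q)%R ->
    (Zbeta beta p q <= (K / beta) ^ (2 * m) * exp (- (kappa * beta * INR N)))%R.
Proof.
Local Open Scope R_scope.
move=> alpha ha; exists 6, (alpha / 2); split; first lra; split; first lra.
move=> beta hb0 hb1 N m hN hm p q [hp hpN] [hq hqN] hd.
set t := beta / 2.
have ht : 0 < t by rewrite /t; lra.
have hib : 1 <= / beta.
  rewrite -Rinv_1; apply: Rinv_le_contravar; lra.
have B : forall a : 'I_m, \big[Rplus/0]_b exp (- (t * Rabs (INR (p a) - INR (q b)))) <= 6 / beta.
  move=> a; apply: Rle_trans (row_bound (N := N) (p a) ht hq (fun i => (hqN i).2)) _.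
  have -> : 2 * (1 + t) / t = 4 * / beta + 2 by rewrite /t; field; lra.
  rewrite /Rdiv; lra.
set c := exp (- (t * (alpha * INR N))).
have hc : 0 < c by apply: exp_pos.
have step1 : Zbeta beta p q <= \big[Rplus/0]_(s : 'S_m) (c * exp (- (t * energy s p q))).
  apply: sum_le => s _.
  have hE : alpha * INR N <= energy s p q by apply: Rle_trans hd (rearr hp hq s).
  have -> : - (beta * energy s p q) = - (t * energy s p q) + - (t * energy s p q)
    by rewrite /t; field.
  rewrite exp_plus; apply: Rmult_le_compat_r; first by left; apply: exp_pos.
  apply: exp_le; apply: Ropp_le_contravar; apply: Rmult_le_compat_l; lra.
apply: Rle_trans step1 _.
rewrite -big_distrr /=.
have -> : exp (- (alpha / 2 * beta * INR N)) = c by rewrite /c /t; congr exp; field.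
rewrite Rmult_comm; apply: Rmult_le_compat_r; first lra.
have E2 : forall s : 'S_m, exp (- (t * energy s p q)) =
   \big[Rmult/1]_a exp (- (t * Rabs (INR (p a) - INR (q (s a))))).
  by move=> s; rewrite /energy scale_sum exp_sum.
rewrite (eq_bigr _ (fun s _ => E2 s)).
apply: Rle_trans (perm_bound (w := fun a b => exp (- (t * Rabs (INR (p a) - INR (q b))))) _) _.
  by move=> a b; left; apply: exp_pos.
apply: Rle_trans (_ : \big[Rmult/1]_(a < m) (6 / beta) <= _).
  refine (proj2 (prod_le _ (fun a _ => _))); split; last exact: B.
  apply: sum_ge0 => b _; left; exact: exp_pos.
rewrite prod_const; apply: Rle_pow.
  rewrite /Rdiv; lra.
apply/leP; rewrite mul2n -addnn; exact: leq_addr.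
Qed.
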